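(* Let $(E,f)$ be a polymatroid that admits a tensor product $(E\times\{1,2,3\},g)$ with $U_{2,3}$. For $A_1,A_2,A_3\subseteq E$ put $s=f(A_1\cup A_2\cup A_3)$, $r_i=f(A_i)$ for $i=1,2,3$, and for $\{i,j,k\}=\{1,2,3\}$ put $s_i=f(A_j\cup A_k)$. Define \[ \alpha(A_1,A_2,A_3)=\min\{r_1+r_2+r_3,\ s_1+s_2+s_3-s\},\qquad \beta(A_1,A_2,A_3)=\max\{s_1+r_1,\ s_2+r_2,\ s_3+r_3\}. \] Then for every $A_1,A_2,A_3\subseteq E$, \[ \beta(A_1,A_2,A_3)\le g\big((A_1\times\{1\})\cup(A_2\times\{2\})\cup(A_3\times\{3\})\big)\le \alpha(A_1,A_2,A_3). \]
   Context: A polymatroid $(E,f)$ consists of a finite ground set $E$ and a function $f\colon 2^E\to\mathbb{R}$ with $f(\emptyset)=0$ that is monotone ($S\subseteq T\Rightarrow f(S)\le f(T)$) and submodular ($f(S)+f(T)\ge f(S\cup T)+f(S\cap T)$). The uniform matroid $U_{2,3}$ is the polymatroid on $\{1,2,3\}$ with rank function $r(T)=\min\{|T|,2\}$. A tensor product of polymatroids $(E_1,f_1)$ and $(E_2,f_2)$ is a polymatroid $(E_1\times E_2,g)$ such that $g(S\times T)=f_1(S)f_2(T)$ for all $S\subseteq E_1$, $T\subseteq E_2$. *)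

(* Defs.v *)
From mathcomp Require Import all_boot all_order all_algebra.
From mathcomp Require Import reals.
Set Implicit Arguments. Unset Strict Implicit. Unset Printing Implicit Defensive.
Import Order.TTheory GRing.Theory Num.Theory.
Local Open Scope ring_scope.

Definition polymatroid (R : realDomainType) (E : finType) (f : {set E} -> R) : Prop :=
  [/\ f set0 = 0,
      (forall S T : {set E}, S \subset T -> f S <= f T) &
      (forall S T : {set E}, f (S :|: T) + f (S :&: T) <= f S + f T)].

Definition U23 (R : realDomainType) (T : {set 'I_3}) : R := (minn #|T| 2)%:R.

Definition is_tensor_product (R : realDomainType) (E1 E2 : finType)
  (f1 : {set E1} -> R) (f2 : {set E2} -> R) (g : {set (E1 * E2)} -> R) : Prop :=
  polymatroid g /\
  forall (S : {set E1}) (T : {set E2}), g (setX S T) = f1 S * f2 T.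

(* The three elements 1,2,3 of U_{2,3}'s ground set, as 'I_3 = {0,1,2}. *)
Definition e1 : 'I_3 := @Ordinal 3 0 isT.
Definition e2 : 'I_3 := @Ordinal 3 1 isT.
Definition e3 : 'I_3 := @Ordinal 3 2 isT.

(* Main.v *)
Require Import Defs.
From mathcomp Require Import all_boot all_order all_algebra.
From mathcomp Require Import reals.
From mathcomp Require Import lra.
Import Order.TTheory GRing.Theory Num.Theory.
Local Open Scope ring_scope.

Lemma col3 (i j k c : 'I_3) : i != j -> i != k -> j != k -> [|| c == i, c == j | c == k].
Proof.
by move: i j k c => [[|[|[|?]]] ?] [[|[|[|?]]] ?] [[|[|[|?]]] ?] [[|[|[|?]]] ?].
Qed.

Ltac boolfin :=
  repeat match goal with |- context[?x \in ?A] => case: (x \in A) end;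
  intros; repeat match goal with H : is_true true -> _ |- _ => specialize (H isT) end;
  try done.

Ltac colcases i j k ij ik jk :=
  let x := fresh "x" in let c := fresh "c" in
  let ji := fresh "ji" in let ki := fresh "ki" in let kj := fresh "kj" in
  (have ji : (j == i) = false by rewrite eq_sym (negbTE ij));
  (have ki : (k == i) = false by rewrite eq_sym (negbTE ik));
  (have kj : (k == j) = false by rewrite eq_sym (negbTE jk));
  apply/subsetP; move=> [x c]; rewrite ?inE /=;
  case/or3P: (col3 _ _ _ c ij ik jk) => /eqP ->;
  rewrite ?eqxx ?(negbTE ij) ?(negbTE ik) ?(negbTE jk) ?ji ?ki ?kj /= ?andbT ?andbF ?orbF ?orbT.

Lemma gc1 {R : realType} {E : finType} {f : {set E} -> R} {g : {set (E * 'I_3)} -> R}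
  (Hg : is_tensor_product f (@U23 R) g) S (i : 'I_3) : g (setX S [set i]) = f S.
Proof. by case: Hg => _ ->; rewrite /U23 cards1 /= mulr1. Qed.

Lemma gc2 {R : realType} {E : finType} {f : {set E} -> R} {g : {set (E * 'I_3)} -> R}
  (Hg : is_tensor_product f (@U23 R) g) S (i j : 'I_3) :
  i != j -> g (setX S [set i; j]) = f S * 2%:R.
Proof. by move=> ij; case: Hg => _ ->; rewrite /U23 cards2 ij. Qed.

Lemma gcT {R : realType} {E : finType} {f : {set E} -> R} {g : {set (E * 'I_3)} -> R}
  (Hg : is_tensor_product f (@U23 R) g) S : g (setX S setT) = f S * 2%:R.
Proof. by case: Hg => _ ->; rewrite /U23 cardsT card_ord. Qed.

Lemma key {R : realType} {E : finType} {f : {set E} -> R} {g : {set (E * 'I_3)} -> R}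
  (Hg : is_tensor_product f (@U23 R) g) (P Q U I : {set (E * 'I_3)}) :
  U \subset P :|: Q -> I \subset P :&: Q -> g U + g I <= g P + g Q.
Proof.
case: Hg => [[_ mono sub] _] hU hI.
apply: le_trans (sub P Q); apply: lerD; exact: mono.
Qed.

Lemma gsubadd {R : realType} {E : finType} {f : {set E} -> R} {g : {set (E * 'I_3)} -> R}
  (Hg : is_tensor_product f (@U23 R) g) P Q : g (P :|: Q) <= g P + g Q.
Proof.
have := @key _ _ _ _ Hg P Q _ _ (subxx (P :|: Q)) (sub0set (P :&: Q)).
case: Hg => [[g0 _ _] _]; rewrite g0 addr0 //.
Qed.

Lemma fge0 {R : realType} {E : finType} {f : {set E} -> R} (Hf : polymatroid f) S : 0 <= f S.
Proof. case: Hf => f0 mono _; rewrite -f0; exact: mono (sub0set S). Qed.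

Lemma La {R : realType} {E : finType} {f : {set E} -> R} {g : {set (E * 'I_3)} -> R}
  (Hg : is_tensor_product f (@U23 R) g) {i j k : 'I_3} (ij : i != j) (ik : i != k) (jk : j != k)
  {C D : {set E}} : D \subset C -> f C + f D <= g (setX C [set i] :|: setX D [set j]).
Proof.
move=> /subsetP DC.
have := key Hg (setX C [set i] :|: setX D [set j]) (setX C [set j])
  (setX C [set i; j]) (setX D [set j]).
rewrite (gc2 Hg) // !(gc1 Hg).
have -> : setX C [set i; j] \subset (setX C [set i] :|: setX D [set j]) :|: setX C [set j].
  by colcases i j k ij ik jk; move: (DC x); boolfin.
have -> : setX D [set j] \subset (setX C [set i] :|: setX D [set j]) :&: setX C [set j].
  by colcases i j k ij ik jk; move: (DC x); boolfin.
move=> /(_ isT isT); lra.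
Qed.

Lemma Lb {R : realType} {E : finType} {f : {set E} -> R} {g : {set (E * 'I_3)} -> R}
  (Hg : is_tensor_product f (@U23 R) g) {i j k : 'I_3} (ij : i != j) (ik : i != k) (jk : j != k)
  {C B : {set E}} : B \subset C ->
  g (setX C [set i] :|: setX B [set j] :|: setX B [set k]) <= f C + f B.
Proof.
move=> /subsetP BC.
have := key Hg (setX B setT) (setX C [set i])
  (setX C [set i] :|: setX B [set j] :|: setX B [set k]) (setX B [set i]).
rewrite (gcT Hg) !(gc1 Hg).
have -> : setX C [set i] :|: setX B [set j] :|: setX B [set k] \subset setX B setT :|: setX C [set i].
  by colcases i j k ij ik jk; move: (BC x); boolfin.
have -> : setX B [set i] \subset setX B setT :&: setX C [set i].
  by colcases i j k ij ik jk; move: (BC x); boolfin.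
move=> /(_ isT isT); lra.
Qed.

Lemma LW {R : realType} {E : finType} {f : {set E} -> R} {g : {set (E * 'I_3)} -> R}
  (Hg : is_tensor_product f (@U23 R) g) {i j k : 'I_3} (ij : i != j) (ik : i != k) (jk : j != k)
  (C A B : {set E}) : A \subset C -> B \subset C ->
  f C + f (A :|: B) <= g (setX C [set i] :|: setX A [set j] :|: setX B [set k]).
Proof.
move=> AC BC.
have ABC : A :|: B \subset C by rewrite subUset AC BC.
have kj : k != j by rewrite eq_sym.
have h1 := La Hg ij ik jk ABC.
have h2 := La Hg ik ij kj BC.
have h3 := Lb Hg ij ik jk BC.
move/subsetP: AC => AC'; move/subsetP: BC => BC'.
have := key Hg (setX C [set i] :|: setX A [set j] :|: setX B [set k])
  (setX C [set i] :|: setX B [set j] :|: setX B [set k])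
  (setX C [set i] :|: setX (A :|: B) [set j]) (setX C [set i] :|: setX B [set k]).
have -> : setX C [set i] :|: setX (A :|: B) [set j] \subset
   (setX C [set i] :|: setX A [set j] :|: setX B [set k]) :|:
   (setX C [set i] :|: setX B [set j] :|: setX B [set k]).
  by colcases i j k ij ik jk; move: (AC' x) (BC' x); boolfin.
have -> : setX C [set i] :|: setX B [set k] \subset
   (setX C [set i] :|: setX A [set j] :|: setX B [set k]) :&:
   (setX C [set i] :|: setX B [set j] :|: setX B [set k]).
  by colcases i j k ij ik jk; move: (AC' x) (BC' x); boolfin.
move=> /(_ isT isT); lra.
Qed.

Lemma Beta {R : realType} {E : finType} {f : {set E} -> R} {g : {set (E * 'I_3)} -> R}
  (Hf : polymatroid f)
  (Hg : is_tensor_product f (@U23 R) g) {i j k : 'I_3} (ij : i != j) (ik : i != k) (jk : j != k)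
  (A Aj Ak : {set E}) :
  f (Aj :|: Ak) + f A <= g (setX A [set i] :|: setX Aj [set j] :|: setX Ak [set k]).
Proof.
set B := Aj :|: Ak.
set C := A :|: B.
have h1 : f C + f B <= g (setX C [set i] :|: setX Aj [set j] :|: setX Ak [set k]).
  by apply: LW => //; rewrite /C /B subsetU // ?subsetUl ?subsetUr // orbC.
have := key Hg (setX A [set i] :|: setX Aj [set j] :|: setX Ak [set k])
  (setX C [set i])
  (setX C [set i] :|: setX Aj [set j] :|: setX Ak [set k]) (setX A [set i]).
rewrite !(gc1 Hg).
have -> : setX C [set i] :|: setX Aj [set j] :|: setX Ak [set k] \subset
   (setX A [set i] :|: setX Aj [set j] :|: setX Ak [set k]) :|: setX C [set i].
  by rewrite /C /B; colcases i j k ij ik jk; boolfin.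
have -> : setX A [set i] \subset
   (setX A [set i] :|: setX Aj [set j] :|: setX Ak [set k]) :&: setX C [set i].
  by rewrite /C /B; colcases i j k ij ik jk; boolfin.
move=> /(_ isT isT); lra.
Qed.

Theorem proposition4p2 (R : realType) (E : finType) (f : {set E} -> R)
  (g : {set (E * 'I_3)} -> R) :
  polymatroid f ->
  is_tensor_product f (@U23 R) g ->
  forall A1 A2 A3 : {set E},
    let s := f (A1 :|: A2 :|: A3) in
    let r1 := f A1 in let r2 := f A2 in let r3 := f A3 in
    let s1 := f (A2 :|: A3) in let s2 := f (A1 :|: A3) in let s3 := f (A1 :|: A2) in
    let alpha := Num.min (r1 + r2 + r3) (s1 + s2 + s3 - s) in
    let beta := Num.max (s1 + r1) (Num.max (s2 + r2) (s3 + r3)) in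
    let G := g (setX A1 [set e1] :|: setX A2 [set e2]
                :|: setX A3 [set e3]) in
    beta <= G /\ G <= alpha.
Proof.
move=> Hf Hg A1 A2 A3 s r1 r2 r3 s1 s2 s3 alpha beta G.
have n12 : e1 != e2 by []. have n13 : e1 != e3 by []. have n23 : e2 != e3 by [].
have n21 : e2 != e1 by []. have n31 : e3 != e1 by []. have n32 : e3 != e2 by [].
split.
  rewrite /beta !ge_max; apply/and3P; split.
  - rewrite /s1 /r1 /G. exact (Beta Hf Hg n12 n13 n23 A1 A2 A3).
  - rewrite /G (setUC (setX A1 _)).
    exact (Beta Hf Hg n21 n23 n13 A2 A1 A3).
  - rewrite /G setUAC (setUC (setX A1 _)).
    exact (Beta Hf Hg n31 n32 n12 A3 A1 A2).
rewrite /alpha le_min; apply/andP; split.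
  rewrite /G /r1 /r2 /r3.
  apply: le_trans (gsubadd Hg _ _) _.
  rewrite -(gc1 Hg A3 e3) -(gc1 Hg A2 e2) -(gc1 Hg A1 e1) lerD2r.
  exact: gsubadd Hg _ _.
set C := A1 :|: A2 :|: A3.
set Y1 := setX (A2 :|: A3) setT :|: setX C [set e1].
set Y2 := setX (A1 :|: A3) setT :|: setX C [set e2].
set Y3 := setX (A1 :|: A2) setT :|: setX C [set e3].
have hY : forall (B : {set E}) (e : 'I_3), B \subset C ->
    g (setX B setT :|: setX C [set e]) <= s + f B.
  move=> B e /subsetP BC.
  have := key Hg (setX B setT) (setX C [set e])
    (setX B setT :|: setX C [set e]) (setX B [set e]).
  rewrite (gcT Hg) !(gc1 Hg) subxx.
  have -> : setX B [set e] \subset setX B setT :&: setX C [set e].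
    apply/subsetP => -[x c]; move: (BC x); rewrite !inE /=; case: (c == e); boolfin.
  move=> /(_ isT isT); rewrite /s -/C; lra.
have sub1 : A2 :|: A3 \subset C by apply/subsetP => x; rewrite /C !inE; boolfin.
have sub2 : A1 :|: A3 \subset C by apply/subsetP => x; rewrite /C !inE; boolfin.
have sub3 : A1 :|: A2 \subset C by apply/subsetP => x; rewrite /C !inE; boolfin.
have hy1 := hY _ e1 sub1. have hy2 := hY _ e2 sub2. have hy3 := hY _ e3 sub3.
have k1 := key Hg Y1 Y2 (setX C [set e1; e2]) (Y1 :&: Y2).
have k2 := key Hg (Y1 :&: Y2) Y3 (setX C [set e1; e2])
  (setX A1 [set e1] :|: setX A2 [set e2] :|: setX A3 [set e3]).
rewrite (gc2 Hg) // in k1 k2.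
have c1 : setX C [set e1; e2] \subset Y1 :|: Y2.
  apply/subsetP => -[x c]; rewrite /Y1 /Y2 /C !inE /=.
  by case: c => [[|[|[|m]]] Hc] //=; boolfin.
have c2 : Y1 :&: Y2 \subset Y1 :&: Y2 by [].
have c3 : setX C [set e1; e2] \subset (Y1 :&: Y2) :|: Y3.
  apply/subsetP => -[x c]; rewrite /Y1 /Y2 /Y3 /C !inE /=.
  by case: c => [[|[|[|m]]] Hc] //=; boolfin.
have c4 : setX A1 [set e1] :|: setX A2 [set e2] :|: setX A3 [set e3] \subset (Y1 :&: Y2) :&: Y3.
  apply/subsetP => -[x c]; rewrite /Y1 /Y2 /Y3 /C !inE /=.
  by case: c => [[|[|[|m]]] Hc] //=; boolfin.
have := k1 c1 c2; have := k2 c3 c4.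
move: hy1 hy2 hy3; rewrite /G /s /s1 /s2 /s3 -/C -/Y1 -/Y2 -/Y3; lra.
Qed.
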